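(* Let $(\Omega,\Sigma,\mu)$ be a finite measure space and let $X(\mu)\subseteq L^0(\mu)$ be a Riesz space (i.e. a vector subspace with $\max\{f,g\}\in X(\mu)$ for all $f,g\in X(\mu)$) equipped with a norm. Let $V:X(\mu)\to X(\mu)$, $V(f)=|f|$. (i) If $V$ is continuous, then the positive cone $X(\mu)^+=\{f\in X(\mu): f\ge 0\ \mu\text{-a.e.}\}$ is closed in $X(\mu)$. (ii) If $X(\mu)$ has the subsequence property, then $X(\mu)^+$ is closed in $X(\mu)$.
   Context: $L^0(\mu)$ is the space of equivalence classes (modulo $\mu$-a.e. equality) of real $\Sigma$-measurable functions on $\Omega$, with the order $f\le g$ iff $f\le g$ $\mu$-a.e. A normed space $X(\mu)\subseteq L^0(\mu)$ has the subsequence property if whenever $f_n,f\in X(\mu)$ and $f_n\to f$ in norm, some subsequence $f_{n(k)}$ converges to $f$ pointwise $\mu$-a.e. *)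

(* Defs.v *)
From HB Require Import structures.
From mathcomp Require Import all_boot all_order all_algebra.
From mathcomp Require Import all_classical all_reals all_analysis.
Set Implicit Arguments. Unset Strict Implicit. Unset Printing Implicit Defensive.
Import Order.TTheory GRing.Theory Num.Theory.
Local Open Scope classical_set_scope.
Local Open Scope ring_scope.

(* Model of X(mu) ⊆ L^0(mu): a set X of real Sigma-measurable functions
   (representatives), with a norm N that is a seminorm on representatives
   vanishing exactly on mu-a.e. null functions (i.e. a norm on the classes). *)

Section Defs.
Context (d : measure_display) (T : measurableType d) (R : realType).
Context (mu : {measure set T -> \bar R}).

Definition riesz_subspace (X : set (T -> R)) : Prop :=
  [/\ (forall f, X f -> measurable_fun setT f),
      X (fun _ => 0),
      (forall f g, X f -> X g -> X (f \+ g)),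
      (forall (a : R) f, X f -> X (fun x => a * f x)) &
      (forall f g, X f -> X g -> X (fun x => Num.max (f x) (g x)))].

Definition norm_on (X : set (T -> R)) (N : (T -> R) -> R) : Prop :=
  [/\ (forall f g, X f -> X g -> N (f \+ g) <= N f + N g),
      (forall (a : R) f, X f -> N (fun x => a * f x) = `|a| * N f) &
      (forall f, X f -> (N f = 0 <-> {ae mu, forall x, f x = 0}))].

Definition pos_cone (X : set (T -> R)) : set (T -> R) :=
  [set f | X f /\ {ae mu, forall x, 0 <= f x}].

Definition closed_in (X : set (T -> R)) (N : (T -> R) -> R) (A : set (T -> R)) :=
  forall f, X f ->
    (forall e : R, 0 < e -> exists2 g, A g & N (g \- f) < e) -> A f.

Definition abs_continuous (X : set (T -> R)) (N : (T -> R) -> R) :=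
  forall f, X f -> forall e : R, 0 < e -> exists2 delta : R, 0 < delta &
    forall g, X g -> N (g \- f) < delta ->
      N ((fun x => `|g x|) \- (fun x => `|f x|)) < e.

Definition subsequence_property (X : set (T -> R)) (N : (T -> R) -> R) :=
  forall (fn : nat -> T -> R) (f : T -> R),
    (forall n, X (fn n)) -> X f ->
    (fun n => N (fn n \- f)) @ \oo --> (0 : R^o) ->
    exists phi : nat -> nat, {homo phi : m n / (m < n)%N} /\
      {ae mu, forall x, (fun k => fn (phi k) x) @ \oo --> (f x : R^o)}.

End Defs.

(* Main.v *)
Require Import Defs.
From mathcomp Require Import all_boot all_order all_algebra.
From mathcomp Require Import all_classical all_reals all_analysis.
From mathcomp Require Import lra.
Set Implicit Arguments. Unset Strict Implicit.
Import Order.TTheory GRing.Theory Num.Theory.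
Import numFieldNormedType.Exports.
Local Open Scope classical_set_scope.
Local Open Scope ring_scope.

Section Aux.
Context (d : measure_display) (T : measurableType d) (R : realType).
Context (mu : {measure set T -> \bar R}).
Context (X : set (T -> R)) (N : (T -> R) -> R).
Hypothesis HX : riesz_subspace X.
Hypothesis HN : norm_on mu X N.

Lemma Xopp f : X f -> X (fun x => - f x).
Proof.
case: HX => _ _ _ Hs _ Xf.
have -> : (fun x => - f x) = (fun x => -1 * f x).
  by apply/funext => x; rewrite mulN1r.
exact: Hs.
Qed.

Lemma Xsub f g : X f -> X g -> X (f \- g).
Proof.
case: HX => _ _ Ha _ _ Xf Xg.
have -> : f \- g = f \+ (fun x => - g x) by [].
by apply: Ha => //; apply: Xopp.
Qed.

Lemma Xabs f : X f -> X (fun x => `|f x|).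
Proof.
case: HX => _ _ _ _ Hm Xf.
have -> : (fun x => `|f x|) = (fun x => Num.max (f x) (- f x)).
  by apply/funext => x; rewrite maxrN.
by apply: Hm => //; apply: Xopp.
Qed.

Lemma Nopp f : X f -> N (fun x => - f x) = N f.
Proof.
case: HN => _ Hs _ Xf.
have -> : (fun x => - f x) = (fun x => -1 * f x).
  by apply/funext => x; rewrite mulN1r.
by rewrite Hs // normrN normr1 mul1r.
Qed.

Lemma Nsym f g : X f -> X g -> N (f \- g) = N (g \- f).
Proof.
move=> Xf Xg.
have -> : f \- g = (fun x => - (g \- f) x).
  by apply/funext => x /=; rewrite opprB.
by rewrite Nopp //; apply: Xsub.
Qed.

Lemma Ntri f g h : X f -> X g -> X h -> N (f \- h) <= N (f \- g) + N (g \- h).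
Proof.
case: HN => Ht _ _ Xf Xg Xh.
have -> : f \- h = (f \- g) \+ (g \- h).
  by apply/funext => x /=; rewrite addrA subrK.
by apply: Ht; apply: Xsub.
Qed.

Lemma Nge0 f : X f -> 0 <= N f.
Proof.
move=> Xf.
have h0 : N (f \- f) = 0.
  case: HN => _ _ Hz; apply/Hz; first exact: Xsub.
  by apply: aeW => x /=; rewrite subrr.
have : N (f \- f) <= N f + N (fun x => - f x).
  by case: HN => Ht _ _; apply: Ht => //; apply: Xopp.
rewrite h0 Nopp //; lra.
Qed.

Lemma Nae0 f : X f -> {ae mu, forall x, f x = 0} -> N f = 0.
Proof. by case: HN => _ _ Hz Xf H; apply/Hz. Qed.

End Aux.

Lemma ge0_cvg (R: realType) (u : nat -> R) (l : R) :
  (forall n, 0 <= u n) -> u @ \oo --> (l : R^o) -> 0 <= l.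
Proof.
move=> h cv.
rewrite -(cvg_lim _ cv) //; apply: limr_ge; [exact: cvgP cv | exact: nearW].
Qed.

Theorem lemma2p2 (d : measure_display) (T : measurableType d) (R : realType)
  (mu : {measure set T -> \bar R}) (mu_fin : (mu setT < +oo)%E)
  (X : set (T -> R)) (N : (T -> R) -> R)
  (HX : riesz_subspace X) (HN : norm_on mu X N) :
  (abs_continuous X N -> closed_in X N (pos_cone mu X)) /\
  (subsequence_property mu X N -> closed_in X N (pos_cone mu X)).
Proof.
split.
- move=> Hc f Xf Hf.
  have Xaf := Xabs HX Xf.
  have key : forall e : R, 0 < e -> N ((fun x => `|f x|) \- f) < e + e.
    move=> e e0.
    have [del del0 Hdel] := Hc f Xf e e0.
    have [g [Xg gpos] Hg] := Hf (Num.min del e) (ltac:(by rewrite lt_min del0 e0)).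
    have Xag := Xabs HX Xg.
    have h1 : N (g \- f) < del by apply: (lt_le_trans Hg); rewrite ge_min lexx.
    have h2 : N (g \- f) < e by apply: (lt_le_trans Hg); rewrite ge_min lexx orbT.
    have h3 := Hdel g Xg h1.
    have h4 : N ((fun x => `|g x|) \- g) = 0.
      apply: (Nae0 HN); first exact: Xsub.
      by apply: filterS gpos => x /= gx; rewrite ger0_norm // subrr.
    apply: le_lt_trans (Ntri HX HN Xaf Xag Xf) _.
    rewrite (Nsym HX HN Xaf Xag).
    apply: ltrD => //.
    apply: le_lt_trans (Ntri HX HN Xag Xg Xf) _.
    by rewrite h4 add0r.
  have NX : X ((fun x => `|f x|) \- f) by apply: Xsub.
  have N0 : N ((fun x => `|f x|) \- f) = 0.
    apply/eqP; rewrite eq_le (Nge0 HX HN NX) andbT; apply/negP => /negP.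
    rewrite -ltNge => Mpos.
    have := key _ (divr_gt0 Mpos (ltr0Sn R 1)).
    by rewrite -splitr ltxx.
  split => //.
  case: HN => _ _ Hz; have := (Hz _ NX).1 N0.
  by apply: filterS => x /= /eqP; rewrite subr_eq0 => /eqP <-.
- move=> Hs f Xf Hf.
  have : forall n : nat, exists g, pos_cone mu X g /\ N (g \- f) < n.+1%:R^-1.
    move=> n; have [g Pg Ng] := Hf _ (ltac:(by rewrite invr_gt0 ltr0Sn) : 0 < n.+1%:R^-1 :> R).
    by exists g.
  move=> /choice [g Hg].
  have Xg n : X (g n) by case: (Hg n) => -[].
  have cv : (fun n => N (g n \- f)) @ \oo --> (0 : R^o).
    apply/cvgrPdist_lt => e e0.
    near=> n.
    rewrite sub0r normrN ger0_norm; last by apply: (Nge0 HX HN); apply: Xsub.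
    apply: lt_trans (Hg n).2 _.
    near: n.
    exact: (near_infty_natSinv_lt (PosNum e0)).
  have [phi [_ Hphi]] := Hs g f Xg Xf cv.
  have gpos : {ae mu, forall x, forall n, 0 <= g n x}.
    apply: ae_foralln => n; by case: (Hg n) => -[].
  split => //.
  apply: filterS2 Hphi gpos => x cvx gx.
  exact: (ge0_cvg (fun k => gx (phi k)) cvx).
Unshelve. all: by end_near.
Qed.
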